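(* Let $n\ge2$ and let $T=P(x,u_0,u_1,u_2)$, with $P$ a real polynomial of total degree at least $2$ in $u_0,u_1,u_2$ (a genuinely non-linear operator of order at most two). If $T(\mathcal P_n)\subset\mathcal P_n$, then $n\le4$.
   Context: Operators are identified with polynomials $P(x,u_0,u_1,u_2)$ acting on smooth $f$ by $P[f](x)=P(x,f(x),f'(x),f''(x))$. $\mathcal P_s$ denotes the space of real polynomials in $x$ of degree at most $s$. *)

(* Defs.v *)
From HB Require Import structures.
From mathcomp Require Import all_boot all_order all_algebra.
From mathcomp Require Import mpoly.
Set Implicit Arguments. Unset Strict Implicit. Unset Printing Implicit Defensive.
Import Order.TTheory GRing.Theory Num.Theory.
Local Open Scope ring_scope.

(* Operators P(x,u0,u1,u2) are multivariate polynomials in 4 variables: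
   variable 0 = x, variable 1 = u0, variable 2 = u1, variable 3 = u2. *)

Definition op_subst (R : comRingType) (f : {poly R}) : 'I_4 -> {poly R} :=
  fun i => match val i with
           | 0%N => 'X
           | 1%N => f
           | 2%N => f^`()
           | _ => f^`(2)
           end.

Definition apply_op (R : comRingType) (P : {mpoly R[4]}) (f : {poly R}) : {poly R} :=
  (map_mpoly polyC P).@[op_subst f].

Definition udeg_ge2 (R : comRingType) (P : {mpoly R[4]}) : Prop :=
  exists2 m : 'X_{1..4}, m \in msupp P &
    (2 <= m (inord 1) + m (inord 2) + m (inord 3))%N.

Definition inPs (R : ringType) (s : nat) (f : {poly R}) : bool := (size f <= s.+1)%N.

(* Main.v *)
Require Import Defs.
From HB Require Import structures.
From mathcomp Require Import all_boot all_order all_algebra.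
From mathcomp Require Import mpoly.
Set Implicit Arguments. Unset Strict Implicit. Unset Printing Implicit Defensive.
Import Order.TTheory GRing.Theory Num.Theory.
Local Open Scope ring_scope.

Section S.
Variable R : realFieldType.

Definition mon (f : {poly R}) (m : 'X_{1..4}) : {poly R} :=
  'X^(m (inord 0)) * f ^+ (m (inord 1)) * (f^`()) ^+ (m (inord 2)) * (f^`(2)) ^+ (m (inord 3)).

Lemma expand (P : {mpoly R[4]}) f :
  apply_op P f = \sum_(m <- msupp P) P@_m *: mon f m.
Proof.
rewrite /apply_op mevalE (perm_big _ (msupp_map_mpoly _ (@polyC_inj _))) /=.
apply: eq_bigr => m _; rewrite mcoeff_map_mpoly -mul_polyC; congr (_ * _).
rewrite !big_ord_recl big_ord0 mulr1 /mon /op_subst /= !mulrA.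
have e : forall k (H : (k < 4)%N), (inord k : 'I_4) = Ordinal H.
  by move=> k H; apply/val_inj; rewrite /= inordK.
rewrite (e 0%N erefl) (e 1%N erefl) (e 2%N erefl) (e 3%N erefl).
congr (_ * _ * _ * _); [congr ('X^(m _)) | congr (_ ^+ m _) ..]; exact: val_inj.
Qed.

Lemma poly_all_roots (p : {poly R}) : (forall a, p.[a] = 0) -> p = 0.
Proof.
move=> H; apply: (@roots_geq_poly_eq0 _ p [seq k%:R | k <- iota 0 (size p)]).
- by apply/allP => x /mapP [k _ ->]; rewrite /root H.
- by rewrite map_inj_uniq ?iota_uniq // => x y /eqP; rewrite eqr_nat => /eqP.
- by rewrite size_map size_iota.

Qed.

Lemma param (K N : nat) (G : nat -> {poly R}) :
  (forall a : R, (size (\sum_(j < K) a ^+ j *: G j)%R <= N)%N) ->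
  forall j, (j < K)%N -> (size (G j) <= N)%N.
Proof.
move=> H j jK; apply/leq_sizeP => e Ne.
pose Phi := \poly_(i < K) (G i)`_e.
have : Phi = 0.
  apply: poly_all_roots => a; rewrite horner_poly.
  transitivity ((\sum_(j < K) a ^+ j *: G j)`_e); last first.
    by rewrite (leq_sizeP _ _ (H a) e Ne).
  by rewrite coef_sum; apply: eq_bigr => i _; rewrite coefZ mulrC.
by move/(congr1 (fun p : {poly R} => p`_j)); rewrite coef_poly jK coef0.
Qed.


Lemma param2 (T : Type) (s : seq T) K N (H : T -> nat -> {poly R}) :
  (forall a : R, (size (\sum_(m <- s) \sum_(j < K) a ^+ j *: H m j)%R <= N)%N) ->
  forall j, (j < K)%N -> (size (\sum_(m <- s) H m j)%R <= N)%N.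
Proof.
move=> Hs; apply: (param (G := fun j => \sum_(m <- s) H m j)) => a.
have -> : (\sum_(j < K) a ^+ j *: \sum_(m <- s) H m j) =
          \sum_(m <- s) \sum_(j < K) a ^+ j *: H m j.
  by rewrite exchange_big; apply: eq_bigr => j _; rewrite scaler_sumr.
exact: Hs.
Qed.

Lemma sum_pick (K k : nat) (F : nat -> {poly R}) : (k < K)%N ->
  \sum_(j < K) (if k == j then F j else 0) = F k.
Proof.
move=> kK; rewrite (bigD1 (Ordinal kK)) //= eqxx big1 ?addr0 // => j.
by rewrite -val_eqE /= eq_sym => /negbTE ->.
Qed.

Definition mi (m : 'X_{1..4}) := m (inord 0).
Definition ma (m : 'X_{1..4}) := m (inord 1).
Definition mb (m : 'X_{1..4}) := m (inord 2).
Definition mc (m : 'X_{1..4}) := m (inord 3).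
Definition mu m := (ma m + mb m + mc m)%N.

Lemma monZ a f m : mon (a *: f) m = a ^+ mu m *: mon f m.
Proof.
rewrite /mon derivZ derivnZ !exprZn /mu !exprD.
rewrite -!scalerAr -!scalerAl !scalerA /ma /mb /mc.
by congr (_ *: _); rewrite mulrC (mulrC (a ^+ _)).
Qed.

Lemma step_scale (s : seq 'X_{1..4}) (c : 'X_{1..4} -> R) N D :
  (forall f : {poly R}, (size f <= N)%N -> (size (\sum_(m <- s) c m *: mon f m)%R <= N)%N) ->
  (forall f : {poly R}, (size f <= N)%N ->
     (size (\sum_(m <- s | mu m == D) c m *: mon f m)%R <= N)%N).
Proof.
move=> Hs f fN.
pose K := (maxn D (\max_(m <- s) mu m)).+1.
rewrite big_mkcond /=.
apply: (param2 (K := K) (H := fun m j => if mu m == j then c m *: mon f m else 0)); last first.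
  by rewrite ltnS leq_maxl.
move=> a.
have -> : \sum_(m <- s) \sum_(j < K) a ^+ j *: (if mu m == j then c m *: mon f m else 0)
   = \sum_(m <- s) c m *: mon (a *: f) m.
  rewrite big_seq_cond [RHS]big_seq_cond; apply: eq_bigr => m /andP [ms _].
  rewrite (eq_bigr (fun j : 'I_K => if mu m == j then a ^+ j *: (c m *: mon f m) else 0)); last first.
    by move=> j _; case: ifP; rewrite ?scaler0.
  rewrite (@sum_pick K (mu m) (fun j => a ^+ j *: (c m *: mon f m))).
    by rewrite monZ !scalerA mulrC.
  rewrite ltnS; apply: leq_trans (leq_maxr _ _).
  by apply: leq_bigmax_seq.
by apply: Hs; apply: leq_trans (size_scale_leq _ _) fN.
Qed.


Definition gen (g : {poly R}) (m : 'X_{1..4}) : {poly R} :=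
  g ^+ (ma m) * (g^`()) ^+ (mb m) * (g^`(2)) ^+ (mc m).

Lemma binom (p : {poly R}) t i K : (i < K)%N ->
  \sum_(j < K) t ^+ j *: (p ^+ (i - j) *+ 'C(i, j)) = (p + t%:P) ^+ i.
Proof.
move=> iK; rewrite exprDn (big_ord_widen K (fun j => p ^+ (i - j) * t%:P ^+ j *+ 'C(i, j))) //.
rewrite [RHS]big_mkcond; apply: eq_bigr => j _; case: ltnP => h.
  by rewrite -polyC_exp mulrC mul_polyC scalerMnr.
by rewrite bin_small // mulr0n scaler0.
Qed.

Lemma comp_exp (p q : {poly R}) k : (p ^+ k) \Po q = (p \Po q) ^+ k.
Proof.
elim: k => [|k IH]; first by rewrite !expr0 comp_polyC.
by rewrite !exprS comp_polyM IH.
Qed.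

Lemma deriv_compXsub (g : {poly R}) t : (g \Po ('X - t%:P))^`() = g^`() \Po ('X - t%:P).
Proof. by rewrite deriv_comp derivB derivX derivC subr0 mulr1. Qed.

Lemma mon_shift (g : {poly R}) t m :
  (mon (g \Po ('X - t%:P)) m) \Po ('X + t%:P) = ('X + t%:P) ^+ (mi m) * gen g m.
Proof.
have K q : (q \Po ('X - t%:P)) \Po ('X + t%:P) = q.
  rewrite -comp_polyA.
  have -> : ('X - t%:P) \Po ('X + t%:P) = 'X.
    by rewrite comp_polyB comp_polyX comp_polyC addrK.
  by rewrite comp_polyXr.
rewrite /mon /gen !comp_polyM !comp_exp comp_polyX /=.
by rewrite !deriv_compXsub !K /mi /ma /mb /mc !mulrA.
Qed.

Lemma step_trans (s : seq 'X_{1..4}) (c : 'X_{1..4} -> R) N I :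
  (forall f : {poly R}, (size f <= N)%N -> (size (\sum_(m <- s) c m *: mon f m)%R <= N)%N) ->
  (forall m, m \in s -> (mi m <= I)%N) ->
  (forall g : {poly R}, (size g <= N)%N ->
     (size (\sum_(m <- s | mi m == I) c m *: gen g m)%R <= N)%N).
Proof.
move=> Hs HI g gN.
rewrite big_mkcond /=.
have -> : \sum_(m <- s) (if mi m == I then c m *: gen g m else 0) =
   \sum_(m <- s) c m *: (('X ^+ (mi m - I) *+ 'C(mi m, I)) * gen g m).
  rewrite big_seq [RHS]big_seq; apply: eq_bigr => m ms.
  case: eqP => [->|ne]; first by rewrite subnn binn expr0 mulr1n mul1r.
  by rewrite bin_small ?mulr0n ?mul0r ?scaler0 // ltn_neqAle HI // andbT; apply/eqP.
apply: (param2 (K := I.+1) (H := fun m j => c m *: (('X ^+ (mi m - j) *+ 'C(mi m, j)) * gen g m))) => // t.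
have -> : \sum_(m <- s) \sum_(j < I.+1) t ^+ j *: (c m *: (('X ^+ (mi m - j) *+ 'C(mi m, j)) * gen g m))
   = (\sum_(m <- s) c m *: mon (g \Po ('X - t%:P)) m) \Po ('X + t%:P).
  rewrite linear_sum /= big_seq [RHS]big_seq; apply: eq_bigr => m ms.
  rewrite linearZ /= mon_shift -(binom _ _ (K := I.+1)) ?ltnS ?HI //.
  rewrite mulr_suml scaler_sumr; apply: eq_bigr => j _.
  by rewrite scalerA mulrC -scalerA -scalerAl.
rewrite size_comp_poly2 ?size_XaddC //; apply: Hs.
by rewrite size_comp_poly2 ?size_XsubC.
Qed.


Definition gen2 (g : {poly R}) (m : 'X_{1..4}) : {poly R} :=
  (g^`()) ^+ (mb m) * (g^`(2)) ^+ (mc m).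

Lemma gen_shift h a m : gen (h + a%:P) m = (h + a%:P) ^+ ma m * gen2 h m.
Proof. by rewrite /gen /gen2 /= !derivD derivC deriv0 !addr0 mulrA. Qed.

Lemma step_shift (s : seq 'X_{1..4}) (c : 'X_{1..4} -> R) N A :
  (0 < N)%N ->
  (forall g : {poly R}, (size g <= N)%N -> (size (\sum_(m <- s) c m *: gen g m)%R <= N)%N) ->
  (forall m, m \in s -> (ma m <= A)%N) ->
  (forall h : {poly R}, (size h <= N)%N ->
     (size (\sum_(m <- s) c m *: ((h ^+ (ma m - A) *+ 'C(ma m, A)) * gen2 h m))%R <= N)%N).
Proof.
move=> N0 Hs HA h hN.
apply: (param2 (K := A.+1) (H := fun m j => c m *: ((h ^+ (ma m - j) *+ 'C(ma m, j)) * gen2 h m))) => // a.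
have -> : \sum_(m <- s) \sum_(j < A.+1) a ^+ j *: (c m *: ((h ^+ (ma m - j) *+ 'C(ma m, j)) * gen2 h m))
   = \sum_(m <- s) c m *: gen (h + a%:P) m.
  rewrite big_seq [RHS]big_seq; apply: eq_bigr => m ms.
  rewrite gen_shift -(binom _ _ (K := A.+1)) ?ltnS ?HA //.
  rewrite mulr_suml scaler_sumr; apply: eq_bigr => j _.
  by rewrite scalerA mulrC -scalerA -scalerAl.
apply: Hs; apply: leq_trans (size_add _ _) _.
by rewrite geq_max hN size_polyC; case: (a != 0).
Qed.


Lemma powZX (k e j : nat) : ((k%:R : R) *: 'X^e) ^+ j = (k ^ j)%:R *: 'X^(e * j).
Proof. by rewrite exprZn natrX exprM. Qed.

Lemma derX1 q : ('X^(q.+2) : {poly R})^`() = (q.+2)%:R *: 'X^(q.+1).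
Proof. by rewrite derivXn scaler_nat. Qed.

Lemma derX2 q : ('X^(q.+2) : {poly R})^`(2) = (q.+2 * q.+1)%:R *: 'X^q.
Proof.
rewrite /= derX1 derivZ derivXn /= -scaler_nat scalerA -natrM.
by rewrite mulnC.
Qed.

Lemma gen2X q m : gen2 ('X^(q.+2)) m =
  (q.+2 ^ mb m * (q.+2 * q.+1) ^ mc m)%:R *: 'X^(q.+1 * mb m + q * mc m).
Proof.
rewrite /gen2 derX1 derX2 !powZX -scalerAl -scalerAr scalerA -natrM.
by rewrite -exprD (mulnC q.+1) (mulnC q).
Qed.

Lemma genX q m : gen ('X^(q.+2)) m =
  (q.+2 ^ mb m * (q.+2 * q.+1) ^ mc m)%:R *: 'X^(q.+2 * ma m + (q.+1 * mb m + q * mc m)).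
Proof.
by rewrite /gen -mulrA -/(gen2 _ _) gen2X -scalerAr -exprM !exprD.
Qed.


Lemma mnm4 (m m' : 'X_{1..4}) : mi m = mi m' -> ma m = ma m' -> mb m = mb m' -> mc m = mc m' -> m = m'.
Proof.
move=> h0 h1 h2 h3; apply/mnmP => j.
have e : forall k (H : (k < 4)%N), Ordinal H = (inord k : 'I_4).
  by move=> k H; apply/val_inj; rewrite /= inordK.
case: j => [[|[|[|[|k]]]] Hk] //; rewrite e //.
Qed.

Lemma bigmax_ex (T : eqType) (s : seq T) (F : T -> nat) : s != [::] ->
  exists2 x, x \in s & F x = \max_(y <- s) F y.
Proof.
elim: s => // a s IH _; rewrite big_cons.
case: s IH => [|b s] IH.
  by exists a; rewrite ?mem_head // big_nil maxn0.
have [x xs e] := IH isT; rewrite -e; case: (leqP (F x) (F a)) => h.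
  by exists a; rewrite ?mem_head // (maxn_idPl h).
exists x; first by rewrite inE xs orbT.
by [].
Qed.


Lemma termX q m A k : (('X^(q.+2) : {poly R}) ^+ (ma m - A) *+ k) * gen2 ('X^(q.+2)) m =
  (k * (q.+2 ^ mb m * (q.+2 * q.+1) ^ mc m))%:R *: 'X^(q.+2 * (ma m - A) + (q.+1 * mb m + q * mc m)).
Proof.
rewrite gen2X -exprM -scaler_nat -scalerAl -scalerAr scalerA -natrM -exprD.
by rewrite mulnC.
Qed.

End S.

From mathcomp Require Import zify ring.

Lemma linE q b c : (q.+1 * b + q * c = q * (b + c) + b)%N.
Proof. ring. Qed.

Lemma ar_hbc a b c A D : (a + b + c = D -> a = A -> A.+2 <= D -> 2 <= b + c)%N.
Proof. lia. Qed.
Lemma ar_hE q b c : (3 <= q -> 2 <= b + c -> q.+3 <= q * (b + c) + b)%N.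
Proof.
move=> h1 h2; have : (q * 2 <= q * (b + c))%N by rewrite leq_mul2l h2 orbT.
lia.
Qed.
Lemma ar_bc a b c a2 b2 c2 : (a + b + c = a2 + b2 + c2 -> a = a2 -> b + c = b2 + c2)%N.
Proof. lia. Qed.
Lemma ar_c b c b2 c2 : (b + c = b2 + c2 -> b = b2 -> c = c2)%N.
Proof. lia. Qed.
Lemma ar_hE2 q r D A b : (2 <= D -> D < A.+2 -> q <= r.+1 -> 3 <= q -> q.+3 <= r * D + (2 * A + b))%N.
Proof.
move=> h1 h2 h3 h4; have : (r * 2 <= r * D)%N by rewrite leq_mul2l h1 orbT.
lia.
Qed.
Lemma ar_case2 D A a2 b2 c2 a3 b3 c3 : (D < A.+2 -> a2 = A -> a2 + b2 + c2 = D -> a3 + b3 + c3 = D -> a3 <= A ->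
  2 * a3 + b3 = 2 * A + b2 -> ~ (a3 = a2 /\ b3 = b2 /\ c3 = c2) ->
  (a2 = D - 1 /\ b2 = 0 /\ c2 = 1 /\ a3 = D - 2 /\ b3 = 2 /\ c3 = 0))%N.
Proof. lia. Qed.

Lemma erE r a b c : (r.+2 * a + (r.+1 * b + r * c) = r * (a + b + c) + (2 * a + b))%N.
Proof. ring. Qed.

Unset Implicit Arguments.
Theorem mainTheorem5 (R : realFieldType) (n : nat) (P : {mpoly R[4]}) :
  (2 <= n)%N ->
  udeg_ge2 P ->
  (forall f : {poly R}, inPs n f -> inPs n (apply_op P f)) ->
  (n <= 4)%N.
Proof.
move=> n2 [ms msP msdeg] Hyp.
rewrite leqNgt; apply/negP => n4.
have [q nq q3] : exists2 q, n = q.+2 & (3 <= q)%N by exists (n - 2)%N; lia.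
subst n.
pose s := msupp P; pose c := fun m => P@_m.
have H0 : forall f : {poly R}, (size f <= q.+3)%N ->
    (size (\sum_(m <- s) c m *: mon f m)%R <= q.+3)%N.
  by move=> f hf; rewrite -expand; exact: Hyp.
pose D := mu ms.
have D2 : (2 <= D)%N by [].
pose s1 := [seq m <- s | mu m == D].
have H1 : forall f : {poly R}, (size f <= q.+3)%N ->
    (size (\sum_(m <- s1) c m *: mon f m)%R <= q.+3)%N.
  by move=> f hf; rewrite big_filter; exact: step_scale.
pose I := \max_(m <- s1) mi m.
have HI : forall m, m \in s1 -> (mi m <= I)%N by move=> m ms1; apply: leq_bigmax_seq.
pose s2 := [seq m <- s1 | mi m == I].
have H2 : forall g : {poly R}, (size g <= q.+3)%N ->
    (size (\sum_(m <- s2) c m *: gen g m)%R <= q.+3)%N.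
  by move=> g hg; rewrite big_filter; exact: step_trans.
have ms1 : ms \in s1 by rewrite mem_filter eqxx.
have ne1 : s1 != [::] by apply/eqP => e; rewrite e in ms1.
have [m1 m1s1 m1I] := bigmax_ex mi ne1.
have m1s2 : m1 \in s2 by rewrite mem_filter m1s1 m1I eqxx.
pose A := \max_(m <- s2) ma m.
have HA : forall m, m \in s2 -> (ma m <= A)%N by move=> m ms2; apply: leq_bigmax_seq.
have ne2 : s2 != [::] by apply/eqP => e; rewrite e in m1s2.
have [m2 m2s2 m2A] := bigmax_ex ma ne2.
have {}m2A : ma m2 = A := m2A.
have inS2 : forall m, m \in s2 -> [/\ c m != 0, mu m = D & mi m = I].
  move=> m; rewrite !mem_filter => /and3P [/eqP -> /eqP -> ms'].
  by split => //; rewrite /c -mcoeff_msupp.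
have us2 : uniq s2 by rewrite !filter_uniq // msupp_uniq.
have [m2c m2u m2i] := inS2 _ m2s2.
case: (leqP A.+2 D) => hAD.
  have H3 := @step_shift R s2 c q.+3 A isT H2 HA 'X^(q.+2) ltac:(by rewrite size_polyXn).
  pose w m := (q.+2 ^ mb m * (q.+2 * q.+1) ^ mc m)%N.
  pose e m := (q.+2 * (ma m - A) + (q.+1 * mb m + q * mc m))%N.
  have E3 : \sum_(m <- s2) c m *: ((('X^(q.+2) : {poly R}) ^+ (ma m - A) *+ 'C(ma m, A)) * gen2 'X^(q.+2) m)
      = \sum_(m <- s2) (c m * ('C(ma m, A) * w m)%:R) *: 'X^(e m).
    by apply: eq_bigr => m _; rewrite termX scalerA.
  rewrite E3 in H3.
  have hE : (q.+3 <= e m2)%N.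
    rewrite /e m2A subnn muln0 add0n linE; apply: ar_hE => //.
    exact: ar_hbc m2u m2A hAD.
  have := leq_sizeP _ _ H3 _ hE; rewrite coef_sumMXn.
  rewrite big_mkcond (bigD1_seq m2) //= eqxx big1_seq ?addr0; last first.
    move=> m /andP [mm2 ms2]; case: eqP => // em.
    have [mc0 mu2 mi2] := inS2 _ ms2.
    case: (ltnP (ma m) A) => hm; first by rewrite bin_small // mul0n mulr0.
    have maA : ma m = A by apply/eqP; rewrite eqn_leq HA.
    have hbc : (mb m + mc m = mb m2 + mc m2)%N.
      by apply: (ar_bc (etrans mu2 (esym m2u))); rewrite maA m2A.
    have hb : mb m = mb m2.
      by move: em; rewrite /e maA m2A subnn !linE hbc muln0 !add0n => /addnI.
    have hc : mc m = mc m2 := ar_c hbc hb.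
    by move: mm2; rewrite (mnm4 (etrans mi2 (esym m2i)) (etrans maA (esym m2A)) hb hc) eqxx.
  apply/eqP; rewrite mulf_eq0 negb_or m2c pnatr_eq0 m2A binn mul1n /w.
  by rewrite muln_eq0 !expn_eq0 negb_or.
pose wr r m := (r.+2 ^ mb m * (r.+2 * r.+1) ^ mc m)%N.
pose Qm m := (2 * ma m + mb m == 2 * A + mb m2)%N.
have Hr : forall r, (q <= r.+1)%N -> (r <= q)%N ->
    \sum_(m <- s2 | Qm m) c m * (wr r m)%:R = 0.
  move=> r hr1 hr2.
  have H3 := H2 'X^(r.+2) ltac:(by rewrite size_polyXn).
  pose er m := (r.+2 * ma m + (r.+1 * mb m + r * mc m))%N.
  have E3 : \sum_(m <- s2) c m *: gen ('X^(r.+2)) m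
      = \sum_(m <- s2) (c m * (wr r m)%:R) *: 'X^(er m).
    by apply: eq_bigr => m _; rewrite genX scalerA.
  rewrite E3 in H3.
  have hE : (q.+3 <= er m2)%N.
    by rewrite /er erE -/(mu m2) m2u m2A; apply: ar_hE2.
  have := leq_sizeP _ _ H3 _ hE; rewrite coef_sumMXn => h; rewrite -[RHS]h.
  rewrite big_seq_cond [RHS]big_seq_cond; apply: eq_bigl => m.
  case ms2: (m \in s2) => //=.
  have [_ mu2 _] := inS2 _ ms2.
  rewrite /Qm /er !erE -/(mu m) -/(mu m2) mu2 m2u m2A eqn_add2l //.
have q0 : (0 < q)%N by apply: leq_trans q3.
have Hq := Hr q (leqnSn q) (leqnn q).
have Hq1 := Hr q.-1 ltac:(by rewrite prednK) (leq_pred q).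
have Qm2 : Qm m2 by rewrite /Qm m2A.
have split : forall r, \sum_(m <- s2 | Qm m) c m * (wr r m)%:R =
    c m2 * (wr r m2)%:R + \sum_(m <- s2 | Qm m && (m != m2)) c m * (wr r m)%:R.
  move=> r; rewrite big_mkcond (bigD1_seq m2) //= Qm2; congr (_ + _).
  by rewrite [RHS](eq_bigl (fun m => (m != m2) && Qm m)) ?big_mkcondr // => m; rewrite andbC.
case: (boolP (has (fun m => (m != m2) && Qm m) s2)) => hh; last first.
  move: Hq; rewrite split big1_seq ?addr0; last first.
    move=> m /andP [/andP [Qm' mm2] ms2]; case/hasP: hh; exists m => //.
    by rewrite mm2.
  apply/eqP; rewrite mulf_eq0 negb_or m2c pnatr_eq0 /wr.
  by rewrite muln_eq0 !expn_eq0 negb_or.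
case/hasP: hh => m3 m3s2 /andP [m3ne Q3].
have key : forall m, m \in s2 -> Qm m -> m != m2 ->
    [/\ mb m2 = 0, mc m2 = 1, mb m = 2 & mc m = 0]%N.
  move=> m ms2 Qmm mne; have [_ mum mim] := inS2 _ ms2.
  have nq : ~ (ma m = ma m2 /\ mb m = mb m2 /\ mc m = mc m2).
    by case=> h1 [h2 h3]; move: mne; rewrite (mnm4 (etrans mim (esym m2i)) h1 h2 h3) eqxx.
  have := ar_case2 hAD m2A m2u mum (HA _ ms2) (eqP Qmm) nq.
  by case=> _ [-> [-> [_ [-> ->]]]].
have [hb2 hc2 _ _] := key m3 m3s2 Q3 m3ne.
pose X := \sum_(m <- s2 | Qm m && (m != m2)) c m.
have split2 : forall r, \sum_(m <- s2 | Qm m) c m * (wr r m)%:R =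
    c m2 * (r.+2 * r.+1)%:R + X * (r.+2 ^ 2)%:R.
  move=> r; rewrite split /wr hb2 hc2 expn0 mul1n expn1 /X mulr_suml.
  congr (_ + _); rewrite big_seq_cond [RHS]big_seq_cond.
  apply: eq_bigr => m /andP [ms2 /andP [Qmm mne]].
  by have [_ _ -> ->] := key m ms2 Qmm mne; rewrite expn0 muln1.
move: Hq Hq1; rewrite !split2 prednK // => e1 e2.
have hne : ((q.+1 * q.+2)%:R : R) != 0 by rewrite pnatr_eq0.
have : c m2 * (q.+1 * q.+2)%:R =
    (q.+1 ^ 2)%:R * (c m2 * (q.+2 * q.+1)%:R + X * (q.+2 ^ 2)%:R)
    - (q.+2 ^ 2)%:R * (c m2 * (q.+1 * q)%:R + X * (q.+1 ^ 2)%:R).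
  rewrite !natrX !natrM -[q.+2]addn2 -[q.+1]addn1 !natrD; ring.
rewrite e1 e2 !mulr0 subr0 => /eqP; rewrite mulf_eq0 (negbTE hne) orbF.
by rewrite (negbTE m2c).
Qed.
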